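(* Let $f_{\mathrm B}$ be a Bad Teacher. For any unlearnable sample $i\in\mathcal S_U$ and any value $f_{\mathbf W}\in\mathbb R$ of the student logit, the derivatives of the per-sample adversarial distillation loss and adversarial training loss with respect to the student logit satisfy $\left|\dfrac{\partial\mathcal L_{\mathrm{AD}}}{\partial f_{\mathbf W}}-\dfrac{\partial\mathcal L_{\mathrm{AT}}}{\partial f_{\mathbf W}}\right|\le e^{-Cd}$.
   Context: $\ell(z)=\log(1+e^{-z})$, $\sigma(z)=(1+e^{-z})^{-1}$. Labeled training samples $(\mathbf X_i,y_i)$, $y_i\in\{\pm1\}$, indices partitioned $[N]=\mathcal S_L\sqcup\mathcal S_U$. As functions of the student's logit $f_{\mathbf W}$ (the student output on the adversarial input of sample $i$), $\mathcal L_{\mathrm{AT}}=\ell(y_if_{\mathbf W})$ and $\mathcal L_{\mathrm{AD}}=\sigma(y_if_{\mathrm T}(\mathbf X_i))\ell(y_if_{\mathbf W})+\sigma(-y_if_{\mathrm T}(\mathbf X_i))\ell(-y_if_{\mathbf W})$ for a fixed teacher $f_{\mathrm T}$. A Bad Teacher $f_{\mathrm B}$ satisfies $y_if_{\mathrm B}(\mathbf X_i)\ge\Gamma$ for all $i\in[N]$ (both learnable and unlearnable samples). Standing assumption: $\Gamma\ge Cd$, where $d$ is the data dimension and $C>0$ is a (sufficiently large) universal constant. *)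

(* Defs.v *)
From Stdlib Require Import Reals.
From Coquelicot Require Import Coquelicot.
Open Scope R_scope.

Definition ell (z : R) : R := ln (1 + exp (- z)).

Definition sigma (z : R) : R := / (1 + exp (- z)).

Definition L_AT (y fW : R) : R := ell (y * fW).

(* Per-sample adversarial-distillation loss with teacher logit fT = f_T(X_i),
   as a function of the student logit fW (label y). *)
Definition L_AD (y fT fW : R) : R :=
  sigma (y * fT) * ell (y * fW) + sigma (- (y * fT)) * ell (- (y * fW)).

Definition input (d : nat) : Type := {k : nat | (k < d)%nat} -> R.

(* Main.v *)
Require Import Defs.
From Stdlib Require Import Reals Lra.
From Coquelicot Require Import Coquelicot.
Open Scope R_scope.

Lemma d_ell (c x : R) : is_derive (fun w => ell (c*w)) x (- (c * exp (-(c*x)) / (1 + exp (-(c*x))))).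
Proof.
  unfold ell. auto_derive.
  - pose proof (exp_pos (-(c*x))); lra.
  - field. pose proof (exp_pos (-(c*x))); lra.
Qed.

Lemma key (y t x : R) (hy : y = 1 \/ y = -1) :
  Rabs (Derive (fun w => L_AD y t w) x - Derive (fun w => L_AT y w) x) = Defs.sigma (- (y*t)).
Proof.
  assert (HAT : Derive (fun w => L_AT y w) x = - (y * exp (-(y*x)) / (1 + exp (-(y*x))))).
  { apply is_derive_unique. apply d_ell. }
  assert (HAD : Derive (fun w => L_AD y t w) x =
     Defs.sigma (y*t) * (- (y * exp (-(y*x)) / (1 + exp (-(y*x)))))
     + Defs.sigma (-(y*t)) * (- ((-y) * exp (-((-y)*x)) / (1 + exp (-((-y)*x)))))).
  { apply is_derive_unique. unfold L_AD.
    apply (is_derive_plus (V:=R_NormedModule) (fun w => Defs.sigma (y*t) * ell (y*w)) (fun w => Defs.sigma (-(y*t)) * ell (-(y*w)))).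
    - apply is_derive_scal. apply d_ell.
    - apply is_derive_scal.
      apply (is_derive_ext (fun w => ell ((-y)*w))). { intro; f_equal; ring. }
      apply d_ell. }
  rewrite HAT, HAD. unfold Defs.sigma.
  replace (-((-y)*x)) with (y*x) by ring.
  replace (- - (y*t)) with (y*t) by ring.
  assert (E1 : exp (-(y*x)) * exp (y*x) = 1) by (rewrite <- exp_plus; replace (-(y*x)+y*x) with 0 by ring; apply exp_0).
  assert (E2 : exp (-(y*t)) * exp (y*t) = 1) by (rewrite <- exp_plus; replace (-(y*t)+y*t) with 0 by ring; apply exp_0).
  pose proof (exp_pos (y*x)). pose proof (exp_pos (-(y*x))).
  pose proof (exp_pos (y*t)). pose proof (exp_pos (-(y*t))).
  set (a := exp (y*x)) in *. set (b := exp (-(y*x))) in *.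
  set (u := exp (y*t)) in *. set (v := exp (-(y*t))) in *.
  replace (/ (1 + v) * - (y * b / (1 + b)) + / (1 + u) * - (- y * a / (1 + a)) - - (y * b / (1 + b)))
    with (y * / (1 + u)).
  - rewrite Rabs_mult. assert (Ry : Rabs y = 1).
    { destruct hy as [-> | ->]; [apply Rabs_R1| rewrite Rabs_left; lra]. }
    rewrite Ry, Rabs_pos_eq; [ring| left; apply Rinv_0_lt_compat; lra].
  - assert (a = / b) by (apply Rmult_eq_reg_l with b; [rewrite Rinv_r; lra | lra]).
    assert (u = / v) by (apply Rmult_eq_reg_l with v; [rewrite Rinv_r; lra | lra]).
    subst a u. rewrite H3, H4. field. lra.
Qed.

Theorem lemmaH2
  (d N : nat) (C Gamma : R)
  (X : nat -> input d) (y : nat -> R)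
  (S_L S_U : nat -> Prop)
  (fB : input d -> R)
  (hC : 0 < C)
  (hGamma : Gamma >= C * INR d)
  (hy : forall i, (i < N)%nat -> y i = 1 \/ y i = -1)
  (hcover : forall i, (i < N)%nat <-> (S_L i \/ S_U i))
  (hdisj : forall i, ~ (S_L i /\ S_U i))
  (hbad : forall i, (i < N)%nat -> y i * fB (X i) >= Gamma) :
  forall i, S_U i -> forall fW : R,
    Rabs (Derive (fun w => L_AD (y i) (fB (X i)) w) fW
          - Derive (fun w => L_AT (y i) w) fW) <= exp (- (C * INR d)).
Proof.
  intros i hi fW.
  assert (hN : (i < N)%nat) by (apply hcover; right; exact hi).
  rewrite key; [|apply hy, hN].
  specialize (hbad i hN).
  set (t := y i * fB (X i)) in *.
  unfold Defs.sigma. replace (- - t) with t by ring.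
  pose proof (exp_pos (-t)).
  apply Rle_trans with (exp (-t)).
  - rewrite exp_Ropp. apply Rinv_le_contravar; [apply exp_pos|lra].
  - apply exp_le_3 || (destruct (Req_dec t (C * INR d)) as [E|E]; [rewrite E; lra|left; apply exp_increasing; lra]).
Qed.
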